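(* For every prime $p$, the algebra $\mathbf{A}_p=(\mathbb{Z}_{p^2},+,0,-,(f_n)_{n\in\mathbb{N}})$ with $f_n(x_1,\ldots,x_n)=p\cdot x_1\cdots x_n$ satisfies: the congruence $[\mathbf{1},\mathbf{1}]$ is the congruence whose classes are the cosets of the subgroup $p\mathbb{Z}_{p^2}$, and $[\mathbf{1},[\mathbf{1},\mathbf{1}]]=\mathbf{0}$ (so $\mathbf{A}_p$ is nilpotent); moreover, for every $n\ge1$ the operation $f_n$ is a $0$-absorbing polynomial that is not constantly $0$, and $\mathbf{A}_p$ is not supernilpotent, i.e. $[\mathbf{1},\ldots,\mathbf{1}]\neq\mathbf{0}$ for every number of entries.
   Context: $\mathbf{1}$ denotes the total relation and $\mathbf{0}$ the identity relation on $\mathbb{Z}_{p^2}$. For congruences $\alpha_1,\ldots,\alpha_n$, the (higher) commutator $[\alpha_1,\ldots,\alpha_n]$ is the smallest congruence $\delta$ such that for all polynomials $f(\bar x_1,\ldots,\bar x_n)$ and tuples $\bar a_i\equiv_{\alpha_i}\bar b_i$: if $f(\bar a_1,\bar x_2,\ldots,\bar x_n)\equiv_\delta f(\bar b_1,\bar x_2,\ldots,\bar x_n)$ for all $(\bar x_2,\ldots,\bar x_n)\in\prod_{i=2}^n\{\bar a_i,\bar b_i\}\setminus\{(\bar b_2,\ldots,\bar b_n)\}$, then $f(\bar a_1,\bar b_2,\ldots,\bar b_n)\equiv_\delta f(\bar b_1,\bar b_2,\ldots,\bar b_n)$. A polynomial $g(x_1,\ldots,x_k)$ is $0$-absorbing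 if $g(y_1,\ldots,y_k)=0$ whenever some $y_i=0$. An algebra is supernilpotent if $[\mathbf{1},\ldots,\mathbf{1}]$ ($n+1$ entries) equals $\mathbf{0}$ for some $n$. *)

(* Defs.v *)
From HB Require Import structures.
From mathcomp Require Import all_boot all_order all_algebra.
Set Implicit Arguments. Unset Strict Implicit. Unset Printing Implicit Defensive.
Import GRing.Theory.
Local Open Scope ring_scope.

Definition Ap (p : nat) : Type := 'Z_(p ^ 2).

Definition fop (p n : nat) (x : 'I_n -> Ap p) : Ap p :=
  p%:R * \prod_(i < n) x i.

Inductive is_poly (p : nat) (E : Type) : ((E -> Ap p) -> Ap p) -> Prop :=
| P_var (e : E) : is_poly (fun env => env e)
| P_const (c : Ap p) : is_poly (fun _ => c)
| P_zero : is_poly (fun _ => 0)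
| P_add f g : is_poly f -> is_poly g -> is_poly (fun env => f env + g env)
| P_opp f : is_poly f -> is_poly (fun env => - f env)
| P_fop (n : nat) (fs : 'I_n -> (E -> Ap p) -> Ap p) :
    (forall i, is_poly (fs i)) ->
    is_poly (fun env => fop (fun i => fs i env)).

Definition Rel (p : nat) := Ap p -> Ap p -> Prop.

Definition is_congruence (p : nat) (th : Rel p) : Prop :=
  [/\ (forall x, th x x),
      (forall x y, th x y -> th y x) /\
      (forall x y z, th x y -> th y z -> th x z),
      (forall x1 x2 y1 y2, th x1 y1 -> th x2 y2 -> th (x1 + x2) (y1 + y2)),
      (forall x y, th x y -> th (- x) (- y)) &
      (forall n (x y : 'I_n -> Ap p), (forall i, th (x i) (y i)) ->
         th (fop x) (fop y))].

Definition total_rel (p : nat) : Rel p := fun _ _ => True.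
Definition id_rel (p : nat) : Rel p := fun x y => x = y.

Definition sel (p n : nat) (c : 'I_n -> bool) (a b : 'I_n -> nat -> Ap p)
  : ('I_n * nat) -> Ap p :=
  fun ij => if c ij.1 then b ij.1 ij.2 else a ij.1 ij.2.

Definition set_first (n : nat) (v : bool) (c : 'I_n -> bool) : 'I_n -> bool :=
  fun i => if val i == 0%N then v else c i.

(* The term condition: delta satisfies the n-ary term condition for
   alphas = [alpha_1; ...; alpha_n]. Tuples are indexed by nat (a polynomial
   only depends on finitely many variables). *)
Definition term_cond (p : nat) (alphas : seq (Rel p)) (delta : Rel p) : Prop :=
  let n := size alphas in
  forall (f : (('I_n * nat) -> Ap p) -> Ap p), is_poly f ->
  forall a b : 'I_n -> nat -> Ap p,
    (forall (i : 'I_n) j, nth (@total_rel p) alphas i (a i j) (b i j)) ->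
    (forall c : 'I_n -> bool, (exists i : 'I_n, val i != 0%N /\ c i = false) ->
       delta (f (sel (set_first false c) a b)) (f (sel (set_first true c) a b))) ->
    delta (f (sel (set_first false (fun _ => true)) a b))
          (f (sel (set_first true (fun _ => true)) a b)).

(* The higher commutator [alpha_1,...,alpha_n]: the smallest congruence
   satisfying the term condition, i.e. the intersection of all of them. *)
Definition commutator (p : nat) (alphas : seq (Rel p)) : Rel p :=
  fun x y => forall delta, is_congruence delta -> term_cond alphas delta -> delta x y.

Definition rel_eq (p : nat) (r s : Rel p) : Prop := forall x y, r x y <-> s x y.

Definition coset_rel (p : nat) : Rel p := fun x y => exists z : Ap p, x - y = p%:R * z.

Definition zero_absorbing (p : nat) (E : Type) (g : (E -> Ap p) -> Ap p) : Prop :=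
  forall y : E -> Ap p, (exists i, y i = 0) -> g y = 0.

Definition supernilpotent (p : nat) : Prop :=
  exists n : nat, (1 <= n)%N /\ rel_eq (commutator (nseq n.+1 (@total_rel p))) (@id_rel p).

(* Main.v *)
Require Import Defs.
From mathcomp Require Import all_boot all_order all_algebra.
From mathcomp Require Import ring.
Import GRing.Theory.
Local Open Scope ring_scope.

Section S.
Variable p : nat.
Hypothesis hp : prime p.

Lemma p2gt1 : (1 < p ^ 2)%N.
Proof. have := prime_gt1 hp => h. by rewrite (leq_trans h) // -{1}(expn1 p) leq_exp2l. Qed.

Lemma pp0 : (p%:R * p%:R : Ap p) = 0.
Proof. by rewrite -natrM mulnn pchar_Zp // p2gt1. Qed.

Lemma pn0 : (p%:R : Ap p) != 0.
Proof.
apply/eqP => /(congr1 val). rewrite /= val_Zp_nat ?p2gt1 // modn_small //.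
  by move=> h; move: (prime_gt1 hp); rewrite h.
by rewrite -{1}(expn1 p) ltn_exp2l // prime_gt1.
Qed.

Definition modp (x y : Ap p) := p%:R * x = p%:R * y.

Lemma poly_pres E (th : Rel p) (Hc : is_congruence th) (f : (E -> Ap p) -> Ap p) :
  is_poly f -> forall e1 e2, (forall x, th (e1 x) (e2 x)) -> th (f e1) (f e2).
Proof.
case: Hc => Hr [Hs Ht] Ha Ho Hf.
elim=> //=.
- move=> f1 g1 _ IH1 _ IH2 e1 e2 H. by apply: Ha; [apply: IH1|apply: IH2].
- move=> f1 _ IH e1 e2 H; exact/Ho/IH.
- move=> n fs _ IH e1 e2 H; apply: Hf => i; exact: IH.
Qed.

Lemma modp_cong : is_congruence modp.
Proof.
split.
- by [].
- split; [move=> x y; rewrite /modp => -> | move=> x y z; rewrite /modp => -> ->] => //.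
- by move=> x1 x2 y1 y2; rewrite /modp !mulrDr => H1 H2; rewrite H1 H2.
- by move=> x y; rewrite /modp !mulrN => H; rewrite H.
- by move=> n x y _; rewrite /modp /fop !mulrA pp0 !mul0r.
Qed.

Lemma coset_cong : is_congruence (@coset_rel p).
Proof.
split.
- by move=> x; exists 0; rewrite subrr mulr0.
- split.
  + by move=> x y [z Hz]; exists (- z); rewrite mulrN -Hz opprB.
  + move=> x y z [z1 H1] [z2 H2]; exists (z1 + z2).
    by rewrite mulrDr -H1 -H2; ring.
- move=> x1 x2 y1 y2 [z1 H1] [z2 H2]; exists (z1 + z2).
  by rewrite mulrDr -H1 -H2; ring.
- by move=> x y [z H]; exists (- z); rewrite mulrN -H; ring.
- move=> n x y _; exists (\prod_i x i - \prod_i y i).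
  by rewrite /fop mulrBr.
Qed.

Lemma id_cong : is_congruence (@id_rel p).
Proof.
split => //.
- by split => [x y ->|x y z -> ->].
- by move=> x1 x2 y1 y2 -> ->.
- by move=> x y ->.
- move=> n x y H; rewrite /fop; congr (_ * _); apply: eq_bigr => i _; exact: H.
Qed.

Lemma coset_modp x y : coset_rel x y -> modp x y.
Proof.
move=> [z H]; apply/eqP; rewrite -subr_eq0 -mulrBr H mulrA pp0 mul0r //.
Qed.

Lemma modp_prod n (x y : 'I_n -> Ap p) :
  (forall i, modp (x i) (y i)) -> modp (\prod_i x i) (\prod_i y i).
Proof.
move=> H; apply: (big_ind2 modp) => //.
move=> x1 x2 y1 y2 H1 H2.
by rewrite /modp mulrA H1 -mulrA mulrCA H2 mulrCA.
Qed.

Lemma poly_coset E (f : (E -> Ap p) -> Ap p) : is_poly f ->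
  forall e1 e2 e3 e4, (forall x, e1 x + e4 x = e2 x + e3 x) ->
  coset_rel (f e1 + f e4) (f e2 + f e3).
Proof.
elim=> /=.
- by move=> e e1 e2 e3 e4 H; exists 0; rewrite H subrr mulr0.
- by move=> c e1 e2 e3 e4 H; exists 0; rewrite subrr mulr0.
- by move=> e1 e2 e3 e4 H; exists 0; rewrite subrr mulr0.
- move=> f1 g1 _ IH1 _ IH2 e1 e2 e3 e4 H.
  have [z1 H1] := IH1 _ _ _ _ H; have [z2 H2] := IH2 _ _ _ _ H.
  by exists (z1 + z2); rewrite mulrDr -H1 -H2; ring.
- move=> f1 _ IH e1 e2 e3 e4 H.
  have [z1 H1] := IH _ _ _ _ H.
  by exists (- z1); rewrite mulrN -H1; ring.
- move=> n fs _ IH e1 e2 e3 e4 H.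
  exists (\prod_i fs i e1 + \prod_i fs i e4 - \prod_i fs i e2 - \prod_i fs i e3).
  by rewrite /fop; ring.
Qed.

Lemma poly_modp E (f : (E -> Ap p) -> Ap p) : is_poly f ->
  forall e1 e2 e3 e4, (forall x, e1 x + e4 x = e2 x + e3 x) ->
  (forall x, modp (e1 x) (e3 x)) -> (forall x, modp (e2 x) (e4 x)) ->
  f e1 + f e4 = f e2 + f e3.
Proof.
move=> Hf; elim: Hf => /=.
- by [].
- by move=> *; rewrite addrC.
- by move=> *; rewrite !addr0.
- move=> f1 g1 _ IH1 _ IH2 e1 e2 e3 e4 H M1 M2.
  have E1 := IH1 _ _ _ _ H M1 M2; have E2 := IH2 _ _ _ _ H M1 M2.
  apply/eqP; rewrite -subr_eq0; apply/eqP.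
  transitivity ((f1 e1 + f1 e4) - (f1 e2 + f1 e3) + ((g1 e1 + g1 e4) - (g1 e2 + g1 e3))).
    by ring.
  by rewrite E1 E2 !subrr addr0.
- move=> f1 _ IH e1 e2 e3 e4 H M1 M2.
  by rewrite -!opprD (IH _ _ _ _ H M1 M2).
- move=> n fs Hfs _ e1 e2 e3 e4 H M1 M2.
  have P13 : modp (\prod_i fs i e1) (\prod_i fs i e3).
    apply: modp_prod => i; exact: (@poly_pres E modp modp_cong _ (Hfs i) _ _ M1).
  have P24 : modp (\prod_i fs i e2) (\prod_i fs i e4).
    apply: modp_prod => i; exact: (@poly_pres E modp modp_cong _ (Hfs i) _ _ M2).
  by rewrite /fop P13 P24 addrC.
Qed.


Lemma comm_upper (alphas : seq (Rel p)) delta x y :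
  commutator alphas x y -> is_congruence delta -> term_cond alphas delta -> delta x y.
Proof. by move=> H Hc Ht; apply: H. Qed.

Lemma tc_lower (alphas : seq (Rel p))
  (Htot : forall (i : nat) x y, nth (@total_rel p) alphas i x y)
  (Hpos : (0 < size alphas)%N) delta (Hc : is_congruence delta)
  (Ht : term_cond alphas delta) (b : 'I_(size alphas) -> Ap p) :
  delta 0 (p%:R * \prod_i b i).
Proof.
pose f := fun env : ('I_(size alphas) * nat -> Ap p) => fop (fun i => env (i, 0%N)).
have Hf : is_poly f := @P_fop p _ (size alphas) (fun i env => env (i, 0%N)) (fun i => P_var _ (i, 0%N)).
case: Hc => Hr _ _ _ _.
have := Ht f Hf (fun _ _ => 0) (fun i _ => b i) (fun i j => Htot i _ _).
have Z : forall v c (i : 'I_(size alphas)), val i != 0%N -> c i = false ->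
    f (sel (set_first v c) (fun _ _ => 0) (fun i _ => b i)) = 0.
  move=> v c i Hi Hci.
  by rewrite /f /fop (bigD1 i) //= /sel /set_first /= (negbTE Hi) Hci mul0r mulr0.
have Z0 : f (sel (set_first false (fun=> true)) (fun _ _ => 0) (fun i _ => b i)) = 0.
  by rewrite /f /fop (bigD1 (Ordinal Hpos)) //= /sel /set_first /= mul0r mulr0.
have Z1 : f (sel (set_first true (fun=> true)) (fun _ _ => 0) (fun i _ => b i)) = p%:R * \prod_i b i.
  rewrite /f /fop; congr (_ * _); apply: eq_bigr => i _.
  by rewrite /sel /set_first /= if_same.
rewrite Z0 Z1; apply.
move=> c [i [Hi Hci]]; rewrite (Z false c i Hi Hci) (Z true c i Hi Hci); exact: Hr.
Qed.

Lemma nseq_tot n (i : nat) x y : nth (@total_rel p) (nseq n (@total_rel p)) i x y.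
Proof. by rewrite nth_nseq if_same. Qed.

Lemma tc_coset : term_cond [:: @total_rel p; @total_rel p] (@coset_rel p).
Proof.
move=> f Hf a b Hab Hhyp.
have [z1 H1] := Hhyp (fun _ => false) (ex_intro _ ord_max (conj isT erefl)).
have HP : forall x, sel (set_first false (fun _ => false)) a b x +
    sel (set_first true (fun _ => true)) a b x =
    sel (set_first true (fun _ => false)) a b x +
    sel (set_first false (fun _ => true)) a b x.
  case=> i j; rewrite /sel /set_first /=; case: (val i == 0%N) => //.
  exact: addrC.
have [z2 H2] := @poly_coset _ _ Hf _ _ _ _ HP.
exists (z1 - z2); rewrite mulrBr -H1 -H2; ring.
Qed.

Lemma claim1 : rel_eq (commutator [:: @total_rel p; @total_rel p]) (@coset_rel p).
Proof.
move=> x y; split.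
  move=> H; exact: (H _ coset_cong tc_coset).
move=> [z Hz] delta Hc Ht.
have := @tc_lower [:: @total_rel p; @total_rel p] (@nseq_tot 2) isT _ Hc Ht
  (fun i => if val i == 0%N then z else 1).
rewrite big_ord_recr big_ord1 /= mulr1 -Hz.
case: Hc => Hr [Hs Htr] Ha _ _ H.
apply: Hs; have := Ha _ _ _ _ H (Hr y).
by rewrite add0r subrK.
Qed.

Lemma tc_id : term_cond [:: @total_rel p; commutator [:: @total_rel p; @total_rel p]] (@id_rel p).
Proof.
move=> f Hf a b Hab Hhyp.
have H1 := Hhyp (fun _ => false) (ex_intro _ ord_max (conj isT erefl)).
have Hm : forall (i : 'I_2) j, val i != 0%N -> modp (a i j) (b i j).
  move=> [[|[|k]] Hi] j //= _.
  have := Hab (@Ordinal 2 1 Hi) j => /= /claim1; exact: coset_modp.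
have H2 := @poly_modp _ _ Hf
  (sel (set_first false (fun _ => false)) a b)
  (sel (set_first true (fun _ => false)) a b)
  (sel (set_first false (fun _ => true)) a b)
  (sel (set_first true (fun _ => true)) a b).
move: H1; rewrite /id_rel => H1.
have : f (sel (set_first false (fun=> false)) a b) + f (sel (set_first true (fun=> true)) a b) =
       f (sel (set_first true (fun=> false)) a b) + f (sel (set_first false (fun=> true)) a b).
  apply: H2.
  - case=> i j; rewrite /sel /set_first /=; case: (val i == 0%N) => //; exact: addrC.
  - case=> i j; rewrite /sel /set_first /=; case: eqP => [_|/eqP Hi]; first by [].
    exact: Hm.
  - case=> i j; rewrite /sel /set_first /=; case: eqP => [_|/eqP Hi]; first by [].
    exact: Hm.
by rewrite H1 => /addrI.
Qed.

Lemma claim2 : rel_eq (commutator [:: @total_rel p;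
                             commutator [:: @total_rel p; @total_rel p]]) (@id_rel p).
Proof.
move=> x y; split.
  move=> H; exact: (H _ id_cong tc_id).
move=> -> delta [Hr _ _ _ _] _; exact: Hr.
Qed.

Lemma claim5 n : (1 <= n)%N -> ~ rel_eq (commutator (nseq n (@total_rel p))) (@id_rel p).
Proof.
move=> Hn Heq.
have : commutator (nseq n (@total_rel p)) 0 (p%:R * \prod_(i < size (nseq n (@total_rel p))) 1).
  move=> delta Hc Ht.
  have Hpos : (0 < size (nseq n (@total_rel p)))%N by rewrite size_nseq.
  exact: (@tc_lower _ (@nseq_tot n) Hpos _ Hc Ht (fun _ => 1)).
move/Heq; rewrite /id_rel big1_eq mulr1 => /esym/eqP.
by rewrite (negbTE pn0).
Qed.

End S.

Theorem mainTheorem6 (p : nat) (hp : prime p) :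
  [/\ rel_eq (commutator [:: @total_rel p; @total_rel p]) (@coset_rel p),
      rel_eq (commutator [:: @total_rel p;
                             commutator [:: @total_rel p; @total_rel p]]) (@id_rel p),
      (forall n : nat, (1 <= n)%N ->
         [/\ is_poly (fun x : 'I_n -> Ap p => fop x),
             zero_absorbing (fun x : 'I_n -> Ap p => fop x) &
             exists x : 'I_n -> Ap p, fop x <> 0]),
      ~ supernilpotent p &
      (forall n : nat, (1 <= n)%N ->
         ~ rel_eq (commutator (nseq n (@total_rel p))) (@id_rel p))].
Proof.
split.
- exact: claim1.
- exact: claim2.
- move=> n _; split.
  + exact: (@P_fop p 'I_n n (fun i env => env i) (fun i => P_var _ i)).
  + move=> y [i Hi]; by rewrite /fop (bigD1 i) //= Hi mul0r mulr0.
  + exists (fun _ => 1); rewrite /fop big1_eq mulr1; apply/eqP; exact: pn0.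
- move=> [n [Hn H]]; exact: (@claim5 p hp n.+1 isT H).
- move=> n Hn; exact: claim5.
Qed.
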